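(* Consider Problem (P) (defined in the context) with objective $f_{Pa}$. Then Algorithm 2 (run with $\hat f_P=\hat f_{Pa}$) yields a solution $\mathcal{Y}_a^g$ satisfying $$f_{Pa}(\mathcal{Y}_a^g)\ge\frac{\min\{\gamma_2,1\}}{2}\big(1-e^{-\gamma_1}\big)f_{Pa}(\mathcal{Y}_a^\star)-\Big(\frac{B+c_{\max}}{c_{\min}}+1\Big)\varepsilon,$$ where $\mathcal{Y}_a^\star$ is an optimal solution to Problem (P), $\gamma_1,\gamma_2\ge0$ are the type-1 and type-2 greedy submodularity ratios of $f_{Pa}$, $c_{\min}=\min_{y\in\bar{\mathcal{M}}}c(y)$, $c_{\max}=\max_{y\in\bar{\mathcal{M}}}c(y)$, and $\varepsilon\ge0$ satisfies $|\hat f_{Pa}(\mathcal{Y})-f_{Pa}(\mathcal{Y})|\le\varepsilon/2$ for all $\mathcal{Y}\subseteq\bar{\mathcal{M}}$.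
   Context: Setting: networked SIR model on directed graph $\mathcal{G}=(\mathcal{V},\mathcal{E})$, $\mathcal{V}=[n]$, $\bar{\mathcal{N}}_i=\{j:(j,i)\in\mathcal{E}\}\cup\{i\}$, weights $a_{ij}\ge0$, sampling parameter $h$, dynamics $s_i[k+1]=s_i[k]-hs_i[k]\beta\sum_{j\in\bar{\mathcal{N}}_i}a_{ij}x_j[k]$, $x_i[k+1]=(1-h\delta)x_i[k]+hs_i[k]\beta\sum_{j\in\bar{\mathcal{N}}_i}a_{ij}x_j[k]$, $r_i[k+1]=r_i[k]+h\delta x_i[k]$, known initial condition, $\theta=[\beta\ \delta]^T$ with prior pdf $p(\theta)$; $x_i[k],r_i[k]\in[0,1)$ are viewed as functions of $\theta$. Given integers $1\le t_1\le t_2$ and, for each $i$, integers $N_i^x,N_i^r,\zeta_i,\eta_i\ge1$, and costs $c_{k,i},b_{k,i}>0$, budget $B\ge0$. Ground set $\bar{\mathcal{M}}=\{(\hat x_i[k],l):i\in\mathcal{V},k\in\{t_1,\dots,t_2\},l\in[\zeta_i]\}\cup\{(\hat r_i[k],l):i\in\mathcal{V},k\in\{t_1,\dots,t_2\},l\in[\eta_i]\}$, with $c((\hat x_i[k],l))=c_{k,i}$, $c((\hat r_i[k],l))=b_{k,i}$, $c(\mathcal{Y})=\sum_{y\in\mathcal{Y}}c(y)$. For $y=(\hat x_i[k],l)$, $H_y=\mathbb{E}_\theta\big[\frac{N_i^x}{x_i[k](1-x_i[k])}\frac{\partial x_i[k]}{\partial\theta}(\frac{\partial x_i[k]}{\partial\theta})^T\big]$,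 and for $y=(\hat r_i[k],l)$, $H_y=\mathbb{E}_\theta\big[\frac{N_i^r}{r_i[k](1-r_i[k])}\frac{\partial r_i[k]}{\partial\theta}(\frac{\partial r_i[k]}{\partial\theta})^T\big]$ (integrand taken as $0$ where the state is $0$); $\mathbb{E}_\theta$ is w.r.t. $p(\theta)$; $H_y\succeq0$. $H(\mathcal{Y})=\sum_{y\in\mathcal{Y}}H_y$. $F_p=\mathbb{E}_\theta[\nabla_\theta\ln p(\theta)\nabla_\theta\ln p(\theta)^T]\succ0$. $f_{Pa}(\mathcal{Y})=\mathrm{Tr}(F_p^{-1})-\mathrm{Tr}((F_p+H(\mathcal{Y}))^{-1})$. Problem (P): maximize $f_{Pa}(\mathcal{Y})$ over $\mathcal{Y}\subseteq\bar{\mathcal{M}}$ subject to $c(\mathcal{Y})\le B$. $\hat f_{Pa}$ is any set function with $\hat f_{Pa}(\emptyset)=0$ approximating $f_{Pa}$. Algorithm 2: (1) pick $\mathcal{Y}_1=\{y\}$ with $y\in\arg\max_{y\in\bar{\mathcal{M}}}\hat f_{Pa}(\{y\})$; (2) set $\mathcal{Y}_2=\emptyset$, $\mathcal{C}=\bar{\mathcal{M}}$; (3) while $\mathcal{C}\ne\emptyset$: choose $y^\star\in\arg\max_{y\in\mathcal{C}}\frac{\hat f_{Pa}(\{y\}\cup\mathcal{Y}_2)-\hat f_{Pa}(\mathcal{Y}_2)}{c(y)}$; if $c(y^\star)+c(\mathcal{Y}_2)\le B$ add $y^\star$ to $\mathcal{Y}_2$; remove $y^\star$ from $\mathcal{C}$;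 (4) output whichever of $\mathcal{Y}_1,\mathcal{Y}_2$ has larger $\hat f_{Pa}$ value. For this run, let $\mathcal{Y}_2^j$ be the set of the first $j$ elements added to $\mathcal{Y}_2$ ($\mathcal{Y}_2^0=\emptyset$). The type-1 greedy submodularity ratio $\gamma_1$ is the largest real with $\sum_{y\in\mathcal{A}\setminus\mathcal{Y}_2^j}(f_{Pa}(\{y\}\cup\mathcal{Y}_2^j)-f_{Pa}(\mathcal{Y}_2^j))\ge\gamma_1(f_{Pa}(\mathcal{A}\cup\mathcal{Y}_2^j)-f_{Pa}(\mathcal{Y}_2^j))$ for all $\mathcal{A}\subseteq\bar{\mathcal{M}}$ and $j\in\{0,\dots,|\mathcal{Y}_2|\}$. The type-2 greedy submodularity ratio $\gamma_2$ is the largest real with $f_{Pa}(\mathcal{Y}_1)-f_{Pa}(\emptyset)\ge\gamma_2(f_{Pa}(\{y\}\cup\mathcal{Y}_2^j)-f_{Pa}(\mathcal{Y}_2^j))$ for all $j\in\{0,\dots,|\mathcal{Y}_2|\}$ and all $y\in\bar{\mathcal{M}}\setminus\mathcal{Y}_2^j$ with $c(y)+c(\mathcal{Y}_2^j)>B$. *)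

(* Defs.v *)
From mathcomp Require Import all_boot all_order all_algebra.
From mathcomp Require Import all_classical all_reals all_analysis.
Set Implicit Arguments. Unset Strict Implicit. Unset Printing Implicit Defensive.
Import Order.TTheory GRing.Theory Num.Theory.
Local Open Scope ring_scope.

Section Defs.
Variables (R : realType) (M : finType).

Definition setcost (c : M -> R) (Y : {set M}) : R := \sum_(y in Y) c y.

Definition psdmx (A : 'M[R]_2) : Prop :=
  A^T = A /\ forall v : 'cV[R]_2, 0 <= (v^T *m A *m v) ord0 ord0.
Definition pdmx (A : 'M[R]_2) : Prop :=
  A^T = A /\ forall v : 'cV[R]_2, v != 0 -> 0 < (v^T *m A *m v) ord0 ord0.

Definition Hset (H : M -> 'M[R]_2) (Y : {set M}) : 'M[R]_2 := \sum_(y in Y) H y.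
Definition fPa (Fp : 'M[R]_2) (H : M -> 'M[R]_2) (Y : {set M}) : R :=
  \tr (invmx Fp) - \tr (invmx (Fp + Hset H Y)).

(* Step (3) of Algorithm 2: [s] is the order in which the candidates are
   removed from C; [greedy_added c B acc s] is the list (in order) of the
   elements added to Y_2 when processing [s] starting from Y_2 = acc. *)
Fixpoint greedy_added (c : M -> R) (B : R) (acc : seq M) (s : seq M) : seq M :=
  match s with
  | [::] => acc
  | y :: s' =>
      greedy_added c B
        (if c y + setcost c [set x in acc] <= B then rcons acc y else acc) s'
  end.

Definition Y2j (c : M -> R) (B : R) (s : seq M) (j : nat) : {set M} :=
  [set x in take j (greedy_added c B [::] s)].

Definition Y2fin (c : M -> R) (B : R) (s : seq M) : {set M} :=
  [set x in greedy_added c B [::] s].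

Definition nadded (c : M -> R) (B : R) (s : seq M) : nat :=
  size (greedy_added c B [::] s).

Definition alg2_step1 (fhat : {set M} -> R) (y1 : M) : Prop :=
  forall y, fhat [set y]%SET <= fhat [set y1]%SET.

(* Step (3): s is a valid removal order: every element of the ground set is
   removed exactly once, and at step j the removed element s_j maximizes the
   marginal-gain/cost ratio among the remaining candidates C w.r.t. the
   current Y_2 (any tie-breaking allowed). *)
Definition alg2_step3 (fhat : {set M} -> R) (c : M -> R) (B : R) (s : seq M)
  : Prop :=
  perm_eq s (enum M) /\
  forall j, (j < size s)%N ->
    let Y := [set x in greedy_added c B [::] (take j s)] in
    forall y, y \notin take j s ->
      (fhat (y |: Y) - fhat Y) / c y
        <= (fhat (nth y s j |: Y) - fhat Y) / c (nth y s j).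

Definition alg2_output (fhat : {set M} -> R) (Y1 Y2 Yg : {set M}) : Prop :=
  (Yg = Y1 \/ Yg = Y2) /\ fhat Y1 <= fhat Yg /\ fhat Y2 <= fhat Yg.

Definition type1_ok (f : {set M} -> R) (c : M -> R) (B : R) (s : seq M)
  (gamma : R) : Prop :=
  forall (A : {set M}) (j : nat), (j <= nadded c B s)%N ->
    gamma * (f (A :|: Y2j c B s j) - f (Y2j c B s j))
      <= \sum_(y in A :\: Y2j c B s j) (f (y |: Y2j c B s j) - f (Y2j c B s j)).

Definition type1_ratio f c B s (gamma : R) : Prop :=
  type1_ok f c B s gamma /\ forall g, type1_ok f c B s g -> g <= gamma.

Definition type2_ok (f : {set M} -> R) (c : M -> R) (B : R) (Y1 : {set M})
  (s : seq M) (gamma : R) : Prop :=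
  forall (j : nat) (y : M), (j <= nadded c B s)%N ->
    y \notin Y2j c B s j -> B < c y + setcost c (Y2j c B s j) ->
    gamma * (f (y |: Y2j c B s j) - f (Y2j c B s j)) <= f Y1 - f (@finset.set0 M).

Definition type2_ratio f c B Y1 s (gamma : R) : Prop :=
  type2_ok f c B Y1 s gamma /\ forall g, type2_ok f c B Y1 s g -> g <= gamma.

End Defs.

(* Main.v *)
Require Import Defs.
From mathcomp Require Import all_boot all_order all_algebra.
From mathcomp Require Import all_classical all_reals all_analysis.
From mathcomp Require Import ring lra.
Import Order.TTheory GRing.Theory Num.Theory.
Local Open Scope ring_scope.
Set Implicit Arguments. Unset Strict Implicit.

Lemma ordE2 : [/\ widen_ord (leqnSn 1) ord_max = 0 :> 'I_2,
  ord_max = 1 :> 'I_2, lift 0 0 = 1 :> 'I_2 & lift 1 0 = 0 :> 'I_2].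
Proof. by split; apply/val_inj. Qed.

Lemma det2 (R : comNzRingType) (A : 'M[R]_2) :
  \det A = A 0 0 * A 1 1 - A 0 1 * A 1 0.
Proof.
rewrite (expand_det_row _ 0) !big_ord_recr big_ord0 /= /cofactor !det_mx11 !mxE /=.
case: ordE2 => -> -> -> _; rewrite expr0 expr1 (_ : lift _ _ = 0); [ring | exact/val_inj].
Qed.

Lemma tr2 (R : comNzRingType) (A : 'M[R]_2) : \tr A = A 0 0 + A 1 1.
Proof. rewrite /mxtrace !big_ord_recr big_ord0 /= add0r. by case: ordE2 => -> -> _ _. Qed.

Lemma adj2 (R : comNzRingType) (A : 'M[R]_2) : \tr (\adj A) = A 0 0 + A 1 1.
Proof.
rewrite tr2 !mxE /cofactor !det_mx11 !mxE /=.
case: ordE2 => _ _ -> ->; rewrite addn0 expr0 mul1r /= expr2 mulrNN !mul1r addrC. done.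
Qed.

Lemma trinv2 (R : fieldType) (A : 'M[R]_2) : \det A != 0 ->
  \tr (invmx A) = (A 0 0 + A 1 1) / \det A.
Proof.
move=> h; rewrite /invmx unitmxE unitfE h mxtraceZ adj2 mulrC //.
Qed.

Section Mat.
Variable R : realType.

Definition v2 (x y : R) : 'cV[R]_2 := \col_i (if i == 0 then x else y).

Lemma qf2 (A : 'M[R]_2) x y :
  ((v2 x y)^T *m A *m (v2 x y)) 0 0 =
  x * x * A 0 0 + x * y * A 0 1 + y * x * A 1 0 + y * y * A 1 1.
Proof.
rewrite !mxE !big_ord_recr big_ord0 /= !mxE !big_ord_recr !big_ord0 /= !mxE.
case: ordE2 => -> -> _ _ /=. ring.
Qed.

Lemma v2_neq0 x y : x != 0 -> v2 x y != 0.
Proof.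
move=> hx; apply/negP => /eqP /matrixP /(_ 0 0); rewrite !mxE /= => e.
by move: hx; rewrite e eqxx.
Qed.

Lemma sym2 (A : 'M[R]_2) : A^T = A -> A 1 0 = A 0 1.
Proof. by move=> /matrixP /(_ 0 1); rewrite mxE => ->. Qed.

Lemma pd_entries (A : 'M[R]_2) : pdmx A ->
  [/\ A 1 0 = A 0 1, 0 < A 0 0, 0 < A 1 1 & 0 < A 0 0 * A 1 1 - A 0 1 * A 0 1].
Proof.
case=> hs hp; have e := sym2 hs.
have h0 : 0 < A 0 0.
  have := hp (v2 1 0) (v2_neq0 0 (oner_neq0 R)); rewrite qf2; lra.
have h1 : 0 < A 1 1.
  have := hp (v2 0 1) _; rewrite qf2.
  have hv : v2 0 1 != 0.
    apply/negP => /eqP /matrixP /(_ 1 0); rewrite !mxE /= => e1.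
    by move: (oner_neq0 R); rewrite e1 eqxx.
  move=> /(_ hv); lra.
split=> //.
have := hp (v2 (A 1 1) (- A 0 1)) (v2_neq0 _ (lt0r_neq0 h1)).
rewrite qf2 e => h.
have : 0 < A 1 1 * (A 0 0 * A 1 1 - A 0 1 * A 0 1) by nra.
rewrite pmulr_rgt0 //.
Qed.

Lemma psd_qf (A : 'M[R]_2) : psdmx A -> A 1 0 = A 0 1 /\ forall x y, 0 <= x * x * A 0 0 + 2 * x * y * A 0 1 + y * y * A 1 1.
Proof.
case=> hs hp; have e := sym2 hs; split=> // x y.
have := hp (v2 x y); rewrite qf2 e; nra.
Qed.

Lemma pd_add (A H : 'M[R]_2) : pdmx A -> psdmx H -> pdmx (A + H).
Proof.
case=> hA pA [hH pH]; split; first by rewrite linearD /= hA hH.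
move=> v hv; rewrite mulmxDr mulmxDl mxE.
by apply: ltr_wpDr; [apply: pH | apply: pA].
Qed.

Lemma psd_add (A H : 'M[R]_2) : psdmx A -> psdmx H -> psdmx (A + H).
Proof.
case=> hA pA [hH pH]; split; first by rewrite linearD /= hA hH.
move=> v; rewrite mulmxDr mulmxDl mxE.
by apply: addr_ge0; [apply: pA | apply: pH].
Qed.

Lemma psd0 : psdmx (0 : 'M[R]_2).
Proof. by split; [rewrite trmx0 | move=> v; rewrite mulmx0 mul0mx mxE]. Qed.

Lemma tr_mono (A H : 'M[R]_2) : pdmx A -> psdmx H ->
  \tr (invmx (A + H)) <= \tr (invmx A).
Proof.
move=> pA pH; have pAH := pd_add pA pH.
case: (pd_entries pA) => eA a0 d0 D0.
case: (pd_entries pAH) => _ _ _; rewrite !mxE => D1.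
case: (psd_qf pH) => eH hq.
rewrite !trinv2 ?det2 ?mxE ?eA ?eH; try lra.
move: D1 D0 hq a0 d0.
set a := A 0 0; set b := A 0 1; set d := A 1 1.
set p := H 0 0; set q := H 0 1; set r := H 1 1 => D1 D0 hq a0 d0.
have q1 := hq (- b) a. have q2 := hq d (- b).
have q3 := hq q (- p). have q4 := hq (- r) q. have q5 := hq 1 1. have q6 := hq 1 (-1).
have p0 := hq 1 0. have r0 := hq 0 1.
have hpr : 0 <= p * r - q * q.
  have hp0 : 0 <= p by lra.
  have hr0 : 0 <= r by lra.
  case: (ltrgt0P p) => [pp|pn|pz]; first by nra.
  - lra.
  case: (ltrgt0P r) => [rp|rn|rz]; first by nra.
  - lra.
  have -> : q = 0 by rewrite pz rz in q5 q6; lra.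
  by rewrite pz rz; lra.
rewrite ler_pdivrMr // mulrAC ler_pdivlMr //.
have := mulr_ge0 (addr_ge0 (ltW a0) (ltW d0)) hpr.
nra.
Qed.
End Mat.

Section Greedy.
Variables (R : realType) (M : finType) (c : M -> R) (B : R) (s : seq M) (y0 : M).

Lemma ga_cat acc s1 s2 :
  greedy_added c B acc (s1 ++ s2) = greedy_added c B (greedy_added c B acc s1) s2.
Proof. by elim: s1 acc => //= y s1 IH acc; rewrite IH. Qed.

Lemma ga_prefix acc t : exists u, greedy_added c B acc t = acc ++ u.
Proof.
elim: t acc => [|y t IH] acc /=; first by exists [::]; rewrite cats0.
case: ifP => _; last exact: IH.
have [u ->] := IH (rcons acc y); exists (y :: u); by rewrite -cats1 -catA.
Qed.

Lemma ga_sub acc t : {subset greedy_added c B acc t <= acc ++ t}.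
Proof.
elim: t acc => [|y t IH] acc /=; first by rewrite cats0.
move=> x hx; have := IH _ _ hx; rewrite !mem_cat.
case: ifP => _; rewrite ?mem_rcons !inE; first by case/orP=> [/orP[->|->]|->]; rewrite ?orbT.
by case/orP=> ->; rewrite ?orbT.
Qed.

Definition G k := [set x in greedy_added c B [::] (take k s)].

Lemma G_step k : (k < size s)%N ->
  G k.+1 = if c (nth y0 s k) + setcost c (G k) <= B then nth y0 s k |: G k else G k.
Proof.
move=> hk; rewrite /G (take_nth y0 hk) -cats1 ga_cat /=.
case: ifP => _ //; apply/setP => x; by rewrite !inE mem_rcons inE.
Qed.

Lemma gl_prefix k : exists u, greedy_added c B [::] s = greedy_added c B [::] (take k s) ++ u.
Proof.
have := ga_prefix (greedy_added c B [::] (take k s)) (drop k s).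
by rewrite -ga_cat cat_take_drop.
Qed.

Lemma Y2j_G k : Y2j c B s (size (greedy_added c B [::] (take k s))) = G k
  /\ (size (greedy_added c B [::] (take k s)) <= nadded c B s)%N.
Proof.
have [u e] := gl_prefix k; rewrite /Y2j /nadded /G e take_size_cat //.
by rewrite size_cat leq_addr.
Qed.

Lemma G_sub_fin k : G k \subset Y2fin c B s.
Proof.
have [u e] := gl_prefix k; apply/fintype.subsetP => x; rewrite /Y2fin /G e !inE mem_cat.
by move=> ->.
Qed.

Lemma G_fin : G (size s) = Y2fin c B s.
Proof. by rewrite /G take_size. Qed.

Lemma G_mono k k' : (k <= k')%N -> G k \subset G k'.
Proof.
move=> hk; have [u e] := ga_prefix (greedy_added c B [::] (take k (take k' s))) (drop k (take k' s)).
move: e; rewrite -ga_cat cat_take_drop take_takel // => e.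
by apply/fintype.subsetP => x; rewrite /G e !inE mem_cat => ->.
Qed.

Lemma G_take k x : x \in G k -> x \in take k s.
Proof. by rewrite /G inE => /ga_sub. Qed.


Lemma nth_notin_take k : uniq s -> (k < size s)%N -> nth y0 s k \notin take k s.
Proof.
move=> hu hk; move: hu; rewrite -{1}(cat_take_drop k s) cat_uniq (drop_nth y0 hk).
by case/and3P => _ /hasPn /(_ (nth y0 s k)) h _; apply: h; rewrite inE eqxx.
Qed.

Lemma nth_notin_G k : uniq s -> (k < size s)%N -> nth y0 s k \notin G k.
Proof. by move=> hu hk; apply/negP => /G_take; apply/negP; apply: nth_notin_take. Qed.

Lemma G_cost k : 0 <= B -> uniq s -> (k <= size s)%N -> setcost c (G k) <= B.
Proof.
move=> hB hu; elim: k => [|k IH] hk.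
  rewrite /G take0 /= /setcost.
  have -> : [set x in ([::] : seq M)] = finset.set0 by apply/setP => x; rewrite !inE.
  by rewrite big_set0.
rewrite G_step //; case: ifP => h; last exact: IH (ltnW hk).
by rewrite /setcost big_setU1 ?nth_notin_G.
Qed.

End Greedy.

Lemma alg_step (R : realType) (a OPT N X n cc D eps B g : R) :
  0 < B -> 0 <= g -> 0 <= a -> 0 <= OPT -> 0 <= N -> 0 <= X -> 0 <= n -> 0 < cc ->
  0 <= eps ->
  a <= expR (- (g * X / B)) * OPT + N * eps + X * n * eps / B ->
  g * a * cc <= B * (D + eps) + cc * n * eps ->
  a - D <= expR (- (g * (X + cc) / B)) * OPT + (N + 1) * eps + (X + cc) * n * eps / B.
Proof.
move=> B0 g0 a0 O0 N0 X0 n0 c0 e0 hI hS.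
set x := g * cc / B.
have x0 : 0 <= x by exact: divr_ge0 (mulr_ge0 g0 (ltW c0)) (ltW B0).
have hD : x * a - eps - cc * n * eps / B <= D.
  have hS' : (g * a * cc) / B <= (B * (D + eps) + cc * n * eps) / B.
    by rewrite ler_pM2r ?invr_gt0.
  have e1 : g * a * cc / B = x * a by rewrite /x; field; apply: lt0r_neq0.
  have e2 : (B * (D + eps) + cc * n * eps) / B = D + eps + cc * n * eps / B.
    by field; apply: lt0r_neq0.
  rewrite e1 e2 in hS'; lra.
have hx : 1 - x <= expR (- x) by have := expR_ge1Dx (- x); lra.
have hx1 : expR (- x) <= 1 by rewrite -expR0 ler_expR; lra.
have hxp := expR_gt0 (- x).
have h1 := ler_wpM2r a0 hx.
have hE : expR (- (g * (X + cc) / B)) = expR (- x) * expR (- (g * X / B)).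
  by rewrite -expRD; congr expR; rewrite /x; field; apply: lt0r_neq0.
have h2 : expR (- x) * a <= expR (- x) * (expR (- (g * X / B)) * OPT + N * eps + X * n * eps / B).
  by rewrite ler_pM2l.
have h3 : 0 <= N * eps + X * n * eps / B.
  apply: addr_ge0; first exact: mulr_ge0.
  exact: divr_ge0 (mulr_ge0 (mulr_ge0 X0 n0) e0) (ltW B0).
have h4 : expR (- x) * (N * eps + X * n * eps / B) <= N * eps + X * n * eps / B.
  by rewrite ler_piMl.
have e3 : (X + cc) * n * eps / B = X * n * eps / B + cc * n * eps / B.
  by field; apply: lt0r_neq0.
rewrite hE e3.
have : expR (- x) * (expR (- (g * X / B)) * OPT + N * eps + X * n * eps / B) =
  expR (- x) * expR (- (g * X / B)) * OPT + expR (- x) * (N * eps + X * n * eps / B).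
  by ring.
lra.
Qed.

Section Main.
Variables (R : realType) (M : finType) (c : M -> R) (B : R) (s : seq M) (y0 : M).
Variables (f fhat : {set M} -> R) (eps : R) (Ystar : {set M}) (gamma1 : R).
Hypothesis cpos : forall y, 0 < c y.
Hypothesis hB : 0 <= B.
Hypothesis f0 : f finset.set0 = 0.
Hypothesis fmono : forall S T : {set M}, S \subset T -> f S <= f T.
Hypothesis approx : forall Y, `|fhat Y - f Y| <= eps / 2.
Hypothesis Yfeas : setcost c Ystar <= B.
Hypothesis Yopt : forall Y, setcost c Y <= B -> f Y <= f Ystar.
Hypothesis huniq : uniq s.
Hypothesis step3 : alg2_step3 fhat c B s.
Hypothesis type1 : type1_ok f c B s gamma1.
Hypothesis g1pos : 0 <= gamma1.

Definition noRej k := forall i, (i < k)%N -> nth y0 s i \in Ystar ->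
  c (nth y0 s i) + setcost c (G c B s i) <= B.

Lemma cover k : (k <= size s)%N -> noRej k ->
  forall y, y \in Ystar -> y \in take k s -> y \in G c B s k.
Proof.
move=> hk hn y hy ht.
have ys : y \in s by apply: mem_take ht.
set i := index y s.
have hi : (i < k)%N.
  have : (index y (take k s) < size (take k s))%N by rewrite index_mem.
  have -> : i = index y (take k s ++ drop k s) by rewrite cat_take_drop.
  rewrite index_cat ht size_takel //.
have his : (i < size s)%N by rewrite index_mem.
have e : nth y0 s i = y by rewrite nth_index.
have := hn i hi; rewrite e => /(_ hy) hc.
have : y \in G c B s i.+1 by rewrite (G_step _ _ y0 his) e hc setU11.
by move/(fintype.subsetP (G_mono c B s hi)).
Qed.

Lemma appr_le Y : fhat Y - eps / 2 <= f Y /\ f Y <= fhat Y + eps / 2.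
Proof. have := approx Y; rewrite ler_norml; lra. Qed.

Lemma sum_sub (A C : {set M}) : A \subset C -> \sum_(y in A) c y <= \sum_(y in C) c y.
Proof.
move=> hAC; rewrite [X in _ <= X](big_setID A) /= (finset.setIidPr hAC) lerDl.
by apply: sumr_ge0 => y _; apply: ltW.
Qed.

Lemma onestep k : (k < size s)%N -> noRej k ->
  gamma1 * (f Ystar - f (G c B s k)) * c (nth y0 s k)
  <= B * (f (nth y0 s k |: G c B s k) - f (G c B s k) + eps)
     + c (nth y0 s k) * #|Ystar|%:R * eps.
Proof.
move=> hk hn.
set Y := G c B s k; set y' := nth y0 s k.
have hc' := cpos y'.
set D := f (y' |: Y) - f Y.
have D0 : 0 <= D by rewrite /D subr_ge0; apply: fmono; apply: finset.subsetUr.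
have e0 : 0 <= eps by have := approx Y; have := normr_ge0 (fhat Y - f Y); lra.
set K := (D + eps) / c y'.
have K0 : 0 <= K by apply: divr_ge0; lra.
have key : forall y, y \in Ystar :\: Y -> f (y |: Y) - f Y <= c y * K + eps.
  move=> y; rewrite inE => /andP [hyY hyS].
  have hyt : y \notin take k s.
    by apply/negP => ht; move/negP: hyY; apply; apply: cover => //; apply: ltnW.
  have := step3.2 k hk y hyt.
  rewrite (set_nth_default y0 y hk) -/y' -/Y => hr.
  have hcy := cpos y.
  have h1 : fhat (y |: Y) - fhat Y <= c y * ((fhat (y' |: Y) - fhat Y) / c y').
    by rewrite -ler_pdivrMl // mulrC.
  have h2 : (fhat (y' |: Y) - fhat Y) / c y' <= K.
    rewrite /K ler_pM2r ?invr_gt0 //.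
    have := appr_le (y' |: Y); have := appr_le Y; rewrite /D; lra.
  have h3 : c y * ((fhat (y' |: Y) - fhat Y) / c y') <= c y * K by rewrite ler_pM2l.
  have := appr_le (y |: Y); have := appr_le Y; lra.
have hsum : \sum_(y in Ystar :\: Y) (f (y |: Y) - f Y)
    <= (\sum_(y in Ystar :\: Y) c y) * K + #|Ystar :\: Y|%:R * eps.
  rewrite mulr_suml mulr_natl -sumr_const -big_split /=.
  exact: ler_sum.
have hcs : \sum_(y in Ystar :\: Y) c y <= B.
  apply: le_trans Yfeas; apply: sum_sub; apply: finset.subsetDl.
have hcard : (#|Ystar :\: Y|%:R : R) <= #|Ystar|%:R.
  by rewrite ler_nat; apply: subset_leq_card; apply: finset.subsetDl.
have [eY hsz] := Y2j_G c B s k.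
have := type1 Ystar hsz; rewrite eY -/Y => ht1.
have hU : f Ystar <= f (Ystar :|: Y) by apply: fmono; apply: finset.subsetUl.
have hg : gamma1 * (f Ystar - f Y) <= B * K + #|Ystar|%:R * eps.
  apply: le_trans (_ : gamma1 * (f (Ystar :|: Y) - f Y) <= _).
    by apply: ler_wpM2l => //; lra.
  apply: le_trans ht1 _; apply: le_trans hsum _.
  apply: lerD; last by apply: ler_wpM2r.
  exact: ler_wpM2r.
have := ler_wpM2r (ltW hc') hg.
have hne : c y' != 0 by apply: lt0r_neq0.
rewrite mulrDl.
have -> : B * K * c y' = B * (D + eps) by rewrite /K; field.
by rewrite (mulrC (c y') (_%:R)) mulrAC; lra.
Qed.

Lemma G0 : G c B s 0 = finset.set0.
Proof. by apply/setP => x; rewrite /G take0 !inE. Qed.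

Lemma OPT0 : 0 <= f Ystar.
Proof.
rewrite -f0; apply: Yopt; by rewrite /setcost big_set0.
Qed.

Lemma eps0 : 0 <= eps.
Proof. have := approx finset.set0; have := normr_ge0 (fhat finset.set0 - f finset.set0); lra. Qed.

Lemma invariant k : 0 < B -> (k <= size s)%N -> noRej k ->
  f Ystar - f (G c B s k) <=
  expR (- (gamma1 * setcost c (G c B s k) / B)) * f Ystar
  + #|G c B s k|%:R * eps + setcost c (G c B s k) * #|Ystar|%:R * eps / B.
Proof.
move=> B0; elim: k => [|k IH] hk hn.
  rewrite G0 /setcost big_set0 cards0 f0 !(mulr0, mul0r) oppr0 expR0 mul1r; lra.
have hk' : (k < size s)%N by [].
have hn' : noRej k by move=> i hi; apply: hn; apply: ltnW.
have IH' := IH (ltnW hk) hn'.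
rewrite (G_step _ _ y0 hk'); case: ifP => hc; last exact: IH'.
have hnot := nth_notin_G c B y0 huniq hk'.
rewrite /setcost big_setU1 //= cardsU1 hnot -/(setcost c (G c B s k)) natrD /=.
have := onestep hk' hn'.
set a := f Ystar - f (G c B s k).
have a0 : 0 <= a by rewrite /a subr_ge0; apply: Yopt; apply: G_cost => //; apply: ltnW.
move=> hS.
have X0 : 0 <= setcost c (G c B s k).
  by apply: sumr_ge0 => y _; apply: ltW.
have := alg_step B0 g1pos a0 OPT0 (ler0n _ #|G c B s k|) X0
  (ler0n _ #|Ystar|) (cpos (nth y0 s k)) eps0 IH' hS.
rewrite /a (addrC (c (nth y0 s k))) /=.
lra.
Qed.

Lemma card_cost (A : {set M}) cmin : (forall y, cmin <= c y) ->
  #|A|%:R * cmin <= setcost c A.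
Proof.
move=> hc; rewrite /setcost mulr_natl -sumr_const.
by apply: ler_sum => y _.
Qed.

Lemma final (y1 : M) (Yg : {set M}) (gamma2 cmin cmax : R) :
  (forall y, cmin <= c y) -> (exists y, c y = cmin) ->
  (forall y, c y <= cmax) ->
  alg2_output fhat [set y1]%SET (Y2fin c B s) Yg ->
  type2_ok f c B [set y1]%SET s gamma2 -> 0 <= gamma2 ->
  Num.min gamma2 1 / 2 * (1 - expR (- gamma1)) * f Ystar
    - ((B + cmax) / cmin + 1) * eps
  <= f Yg.
Proof.
move=> hmin [ym hym] hmax [hYg [ho1 ho2]] t2 g2pos.
have cm0 : 0 < cmin by rewrite -hym.
have cmM : cmin <= cmax by apply: le_trans (hmax y0); apply: hmin.
set K := (B + cmax) / cmin.
have K0 : 0 <= K by apply: divr_ge0; [apply: addr_ge0 => //; apply: le_trans cmM; apply: ltW | apply: ltW].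
set m := Num.min gamma2 1.
have m0 : 0 <= m by rewrite le_min g2pos ler01.
have m1 : m <= 1 by rewrite ge_min lexx orbT.
have m2 : m <= gamma2 by rewrite ge_min lexx.
set e1 := expR (- gamma1).
have e10 : 0 < e1 := expR_gt0 _.
have e11 : e1 <= 1.
  by rewrite /e1 -expR0 ler_expR oppr_le0.
set OPT := f Ystar.
have O0 : 0 <= OPT := OPT0.
have e0 := eps0.
have hY1 : f [set y1]%SET - eps <= f Yg.
  have := appr_le [set y1]%SET; have := appr_le Yg; lra.
have hY2 : f (Y2fin c B s) - eps <= f Yg.
  have := appr_le (Y2fin c B s); have := appr_le Yg; lra.
have fY10 : 0 <= f [set y1]%SET by rewrite -f0; apply: fmono; apply: finset.sub0set.
have hm : m / 2 * (1 - e1) * OPT = (m * (1 - e1) * OPT) / 2 by ring.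
rewrite hm.
pose P := fun i => [&& (i < size s)%N, nth y0 s i \in Ystar &
  ~~ (c (nth y0 s i) + setcost c (G c B s i) <= B)].
have [[t0 Pt0]|nP] := pselect (exists t, P t); last first.
  have hn : noRej (size s).
    move=> i hi hiY; apply/negPn/negP => hr; apply: nP; exists i.
    by rewrite /P hi hiY hr.
  have hsub : Ystar \subset Y2fin c B s.
    apply/fintype.subsetP => y hy; rewrite -G_fin; apply: cover => //.
    rewrite take_size (perm_mem step3.1) mem_enum //.
  have := fmono hsub; rewrite -/OPT => hO.
  have hx : m * (1 - e1) * OPT <= OPT.
    apply: ler_piMl => //; nra.
  have : 0 <= K * eps by apply: mulr_ge0.
  lra.
have exP : exists t, P t by exists t0.
case: (ex_minnP exP) => t /and3P [ht hy' hr] tmin.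
have hn : noRej t.
  move=> i hi hiY; apply/negPn/negP => hr'.
  have : (t <= i)%N by apply: tmin; rewrite /P hiY hr' (ltn_trans hi ht).
  by rewrite leqNgt hi.
set Z := G c B s t; set y' := nth y0 s t.
have hc' := cpos y'.
have hrB : B < c y' + setcost c Z by rewrite ltNge.
have B0 : 0 < B.
  apply: lt_le_trans hc' _; apply: le_trans Yfeas.
  have := sum_sub (_ : [set y']%SET \subset Ystar); rewrite big_set1; apply.
  by rewrite finset.sub1set.
have inv := invariant B0 (ltnW ht) hn.
have os := onestep ht hn.
set X := setcost c Z in inv os hrB.
set N := #|Z| in inv.
set n := #|Ystar| in inv os.
have X0 : 0 <= X by apply: sumr_ge0 => y _; apply: ltW.
have a0 : 0 <= OPT - f Z by rewrite subr_ge0; apply: Yopt; apply: G_cost => //; apply: ltnW.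
have st := alg_step B0 g1pos a0 OPT0 (ler0n _ N) X0 (ler0n _ n) hc' eps0 inv os.
have hB0 : B != 0 by apply: lt0r_neq0.
have hcm0 : cmin != 0 by apply: lt0r_neq0.
have hexp : expR (- (gamma1 * (X + c y') / B)) * OPT <= e1 * OPT.
  apply: ler_wpM2r => //; rewrite /e1 ler_expR lerN2 -mulrA.
  apply: ler_peMr => //; rewrite ler_pdivlMr // mul1r addrC; exact: ltW.
have XB : X <= B by apply: G_cost => //; apply: ltnW.
have hN : N%:R <= B / cmin.
  rewrite ler_pdivlMr //; apply: le_trans XB; exact: card_cost.
have hnB : n%:R <= B / cmin.
  rewrite ler_pdivlMr //; apply: le_trans Yfeas; exact: card_cost.
have hK1 : B / cmin + 1 <= K.
  have -> : K = B / cmin + 1 + (cmax - cmin) / cmin by rewrite /K; field.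
  rewrite lerDl; apply: divr_ge0; lra.
have hT : (X + c y') * n%:R * eps / B <= K * eps.
  have -> : (X + c y') * n%:R * eps / B = ((X + c y') * n%:R / B) * eps by field.
  apply: ler_wpM2r => //.
  have h1 : (X + c y') * n%:R <= (B + cmax) * (B / cmin).
    have := hmax y'; have := ler0n R n; move=> ? ?; apply: ler_pM => //; lra.
  have -> : K = (B + cmax) * (B / cmin) / B by rewrite /K; field; apply/andP; split.
  by rewrite ler_pM2r ?invr_gt0.
have hNe : N%:R * eps <= B / cmin * eps by apply: ler_wpM2r.
have [eY hsz] := Y2j_G c B s t.
have hg2 : gamma2 * (f (y' |: Z) - f Z) <= f [set y1]%SET.
  have := t2 _ y' hsz; rewrite eY f0 subr0; apply.
    exact: nth_notin_G.
  exact: hrB.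
have hD : 0 <= f (y' |: Z) - f Z by rewrite subr_ge0; apply: fmono; apply: finset.subsetUr.
have fZ0 : 0 <= f Z by rewrite -f0; apply: fmono; apply: finset.sub0set.
have hfin : f Z <= f (Y2fin c B s) by apply: fmono; apply: G_sub_fin.
have mD : m * (f (y' |: Z) - f Z) <= gamma2 * (f (y' |: Z) - f Z) by exact: ler_wpM2r.
have mZ : m * f Z <= f Z by exact: ler_piMl.
set E := (N%:R + 1) * eps + (X + c y') * n%:R * eps / B.
have st' : OPT - f (y' |: Z) <= expR (- (gamma1 * (X + c y') / B)) * OPT + E.
  move: st; rewrite -/y' -/Z -/OPT /E; lra.
have E0 : 0 <= E.
  rewrite /E; apply: addr_ge0; first by apply: mulr_ge0 => //; apply: addr_ge0.
  apply: divr_ge0 (ltW B0); apply: mulr_ge0 => //; apply: mulr_ge0 => //.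
  by apply: addr_ge0 => //; apply: ltW.
have hEK : E <= (K + K) * eps.
  have : (N%:R + 1) * eps = N%:R * eps + eps by ring.
  have : (B / cmin + 1) * eps <= K * eps by apply: ler_wpM2r.
  have : (B / cmin + 1) * eps = B / cmin * eps + eps by ring.
  have : (K + K) * eps = K * eps + K * eps by ring.
  rewrite /E; lra.
have mV : m * ((1 - e1) * OPT - E) <= m * f (y' |: Z).
  apply: ler_wpM2l => //.
  have : (1 - e1) * OPT = OPT - e1 * OPT by ring.
  lra.
have mE : m * E <= E by exact: ler_piMl.
have r1 : m * ((1 - e1) * OPT - E) = m * (1 - e1) * OPT - m * E by ring.
have r2 : m * f (y' |: Z) = m * f Z + m * (f (y' |: Z) - f Z) by ring.
have : (K + K) * eps = K * eps + K * eps by ring.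
have : (K + 1) * eps = K * eps + eps by ring.
lra.
Qed.

End Main.

Lemma Hset_psd (R : realType) (M : finType) (H : M -> 'M[R]_2) (S : {set M}) :
  (forall y, psdmx (H y)) -> psdmx (Hset H S).
Proof.
move=> hH; rewrite /Hset; apply: (big_ind (fun A => psdmx A)) => //.
- exact: psd0.
- by move=> A C; apply: psd_add.
Qed.

Lemma fPa0 (R : realType) (M : finType) (Fp : 'M[R]_2) (H : M -> 'M[R]_2) :
  fPa Fp H finset.set0 = 0.
Proof. by rewrite /fPa /Hset big_set0 addr0 subrr. Qed.

Lemma fPa_mono (R : realType) (M : finType) (Fp : 'M[R]_2) (H : M -> 'M[R]_2) :
  pdmx Fp -> (forall y, psdmx (H y)) ->
  forall S T : {set M}, S \subset T -> fPa Fp H S <= fPa Fp H T.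
Proof.
move=> pF hH S T hST; rewrite /fPa lerD2l lerN2.
have -> : Hset H T = Hset H S + Hset H (T :\: S).
  by rewrite /Hset (big_setID S) /= (finset.setIidPr hST).
rewrite addrA; apply: tr_mono; last exact: Hset_psd.
by apply: pd_add => //; apply: Hset_psd.
Qed.

Theorem theorem4 (R : realType) (M : finType)
  (c : M -> R) (B : R) (Fp : 'M[R]_2) (H : M -> 'M[R]_2)
  (fhat : {set M} -> R) (eps : R)
  (y1 : M) (s : seq M) (Yg Ystar : {set M})
  (gamma1 gamma2 cmin cmax : R) :
  (forall y, 0 < c y) ->
  0 <= B ->
  pdmx Fp ->
  (forall y, psdmx (H y)) ->
  fhat (@finset.set0 M) = 0 ->
  0 <= eps ->
  (forall Y : {set M}, `|fhat Y - fPa Fp H Y| <= eps / 2) ->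
  (* Ystar is an optimal solution of Problem (P) *)
  setcost c Ystar <= B ->
  (forall Y : {set M}, setcost c Y <= B -> fPa Fp H Y <= fPa Fp H Ystar) ->
  (* cmin, cmax *)
  (forall y, cmin <= c y) -> (exists y, c y = cmin) ->
  (forall y, c y <= cmax) -> (exists y, c y = cmax) ->
  (* a run of Algorithm 2 with fhat *)
  alg2_step1 fhat y1 ->
  alg2_step3 fhat c B s ->
  alg2_output fhat [set y1]%SET (Y2fin c B s) Yg ->
  (* greedy submodularity ratios of f_Pa for this run *)
  type1_ratio (fPa Fp H) c B s gamma1 ->
  type2_ratio (fPa Fp H) c B [set y1]%SET s gamma2 ->
  Num.min gamma2 1 / 2 * (1 - expR (- gamma1)) * fPa Fp H Ystar
    - ((B + cmax) / cmin + 1) * eps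
  <= fPa Fp H Yg.
Proof.
move=> cpos hB pF hH _ _ approx Yfeas Yopt hmin hminex hmax _ _ st3 out [t1 m1] [t2 m2].
have fm := fPa_mono pF hH.
have f0 := fPa0 Fp H.
have huniq : uniq s by rewrite (perm_uniq st3.1) enum_uniq.
have g1pos : 0 <= gamma1.
  apply: m1 => A j _; rewrite mul0r; apply: sumr_ge0 => y _.
  by rewrite subr_ge0; apply: fm; apply: finset.subsetUr.
have g2pos : 0 <= gamma2.
  apply: m2 => j y _ _ _; rewrite mul0r subr_ge0; apply: fm; apply: finset.sub0set.
exact: (final y1 cpos hB f0 fm approx Yfeas Yopt huniq st3 t1 g1pos hmin hminex hmax out t2 g2pos).
Qed.
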